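(* Let $X$ and $\varepsilon$ be independent real random variables and $Y=X+\varepsilon$. Suppose $P(X\in\{\xi_\ell\}_{\ell\in\mathbb{N}_0})=1$ for real numbers $\xi_0<\xi_1<\xi_2<\cdots$, and $F_X\{\xi_0\}>0$. Suppose $\varepsilon$ is purely discrete with (countable) set of atoms $\mathbb{T}_\varepsilon$, and there exists $z_0\in\mathbb{T}_\varepsilon$ with $F_\varepsilon(z_0-)=0$. Define $p_X(\ell):=F_X\{\xi_\ell\}\mathbf 1_{\mathbb{N}_0}(\ell)$, $$\ddot p_{\varepsilon,+}(\ell,z):=\Big(\delta_{z,0}-\frac{F_\varepsilon\{z_0+\xi_\ell-\xi_{\ell-z}\}}{F_\varepsilon\{z_0\}}\mathbf 1_{\{0,\dots,\ell\}}(z)\Big)\mathbf 1_{\mathbb{N}_0}(\ell),\qquad \ddot p_Y(\ell):=\frac{F_Y\{z_0+\xi_\ell\}}{F_\varepsilon\{z_0\}}\mathbf 1_{\mathbb{N}_0}(\ell)$$ for $\ell,z\in\mathbb{Z}$. Then $$p_X(\ell)=\sum_{z\in\mathbb{Z}}\ddot p_Y(\ell-z)\,\beta\{\ddot p_{\varepsilon,+}\}(\ell,z)\qquad(\ell\in\mathbb{Z}).$$ Moreover, if there exists $s>0$ with $\xi_\ell=\xi_0+s\ell$ for all $\ell\in\mathbb{N}_0$, then with $\ddot u_{\varepsilon,+}(z):=\ddot p_{\varepsilon,+}(z,z)$, $$F_X(\xi)=(\Theta\{\ddot p_Y\}*\Theta\{\gamma\{\ddot u_{\varepsilon,+}\}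\})\Big(\frac{\xi-\xi_0}{s}\Big)\qquad(\xi\in\mathbb{R}).$$
   Context: $F_B$ denotes the distribution function of a random variable $B$, $F_B\{x\}:=P(B=x)$, $F_B(x-):=P(B<x)$. $\delta_{z,0}=1$ if $z=0$, else $0$. For a double sequence $\ddot p(\ell,z)$ vanishing for $z<0$: $\ddot p^{*0}(\ell,z):=\delta_{z,0}$, $\ddot p^{*j}(\ell,z):=\sum_{z_1\in\mathbb{Z}}\ddot p(\ell,z_1)\ddot p^{*(j-1)}(\ell-z_1,z-z_1)$ for $j\ge1$, and $\beta\{\ddot p\}(\ell,z):=\sum_{j=0}^{z}\ddot p^{*j}(\ell,z)$ (empty sum $=0$). For a single sequence $\ddot u$ vanishing on negative integers: $\ddot u^{*0}(z):=\delta_{z,0}$, $\ddot u^{*j}(z):=\sum_y\ddot u(z-y)\ddot u^{*(j-1)}(y)$, $\gamma\{\ddot u\}(z):=\sum_{j=0}^z\ddot u^{*j}(z)$. For a sequence $p$ vanishing on negative integers, $\Theta\{p\}(\xi):=\sum_{z=-\infty}^{\lfloor\xi\rfloor}p(z)$, and for two such sequences $(\Theta\{p\}*\Theta\{q\})(x):=\sum_{z\in\mathbb{Z}}\Theta\{p\}(x-z)q(z)$ (the Stieltjes convolution, a finite sum). *)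

(* Defs.v *)
From HB Require Import structures.
From mathcomp Require Import all_boot all_order all_algebra.
From mathcomp Require Import all_classical all_reals all_analysis.
Set Implicit Arguments. Unset Strict Implicit. Unset Printing Implicit Defensive.
Import Order.TTheory GRing.Theory Num.Theory.
Local Open Scope classical_set_scope.
Local Open Scope ring_scope.

Section Defs.
Context (d : measure_display) (T : measurableType d) (R : realType)
        (P : probability T R).

Definition atom_mass (B : T -> R) (x : R) : R := fine (P (B @^-1` [set x])).
Definition cdf_left (B : T -> R) (x : R) : R := fine (P (B @^-1` `]-oo, x[)).
Definition distr_fn (B : T -> R) (x : R) : R := fine (P (B @^-1` `]-oo, x])).

Definition indep_RV (X Y : T -> R) : Prop :=
  forall A B : set R, measurable A -> measurable B ->
    P (X @^-1` A `&` Y @^-1` B) = (P (X @^-1` A) * P (Y @^-1` B))%E.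

Definition purely_discrete (B : T -> R) : Prop :=
  exists S : set R, countable S /\ P (B @^-1` S) = 1%E.
End Defs.

Section Conv.
Context (R : realType).

(* Sums over z1 in Z below are restricted to the range where the summand can be
   nonzero, for sequences vanishing at negative second argument. *)
Fixpoint dconv_pow (p : int -> int -> R) (j : nat) (l z : int) : R :=
  match j with
  | 0 => if z == 0 then 1 else 0
  | j'.+1 => \sum_(k < (absz z).+1 | (k%:Z <= z)%R)
               p l k%:Z * dconv_pow p j' (l - k%:Z) (z - k%:Z)
  end.

Definition dbeta (p : int -> int -> R) (l z : int) : R :=
  if (0 <= z)%R then \sum_(j < (absz z).+1) dconv_pow p j l z else 0.

Fixpoint sconv_pow (u : int -> R) (j : nat) (z : int) : R :=
  match j with
  | 0 => if z == 0 then 1 else 0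
  | j'.+1 => \sum_(k < (absz z).+1 | (k%:Z <= z)%R)
               u (z - k%:Z) * sconv_pow u j' k%:Z
  end.

Definition sgamma (u : int -> R) (z : int) : R :=
  if (0 <= z)%R then \sum_(j < (absz z).+1) sconv_pow u j z else 0.

(* Theta{p}(xi) := sum_{z <= floor xi} p(z), p vanishing on negatives *)
Definition Theta (p : int -> R) (x : R) : R :=
  \sum_(k < (absz (Num.floor x)).+1 | (k%:Z <= Num.floor x)%R) p k%:Z.

Definition Theta_conv (p q : int -> R) (x : R) : R :=
  \sum_(k < (absz (Num.floor x)).+1 | (k%:Z <= Num.floor x)%R)
     Theta p (x - k%:R) * q k%:Z.
End Conv.

Section Paper.
Context (d : measure_display) (T : measurableType d) (R : realType)
        (P : probability T R).

Definition p_X (X : T -> R) (xi : nat -> R) (l : int) : R :=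
  if (0 <= l)%R then atom_mass P X (xi (absz l)) else 0.

Definition pdd_eps (eps : T -> R) (xi : nat -> R) (z0 : R) (l z : int) : R :=
  if (0 <= l)%R then
    (if z == 0 then 1 else 0) -
    (if ((0 <= z) && (z <= l))%R then
        atom_mass P eps (z0 + xi (absz l) - xi (absz (l - z)))
          / atom_mass P eps z0
     else 0)
  else 0.

Definition pdd_Y (Y eps : T -> R) (xi : nat -> R) (z0 : R) (l : int) : R :=
  if (0 <= l)%R then atom_mass P Y (z0 + xi (absz l)) / atom_mass P eps z0
  else 0.
End Paper.

(* Main.v *)
Require Import Defs.
From HB Require Import structures.
From mathcomp Require Import all_boot all_order all_algebra.
From mathcomp Require Import all_classical all_reals all_analysis.
From mathcomp Require Import zify ring lra.
Import Order.TTheory GRing.Theory Num.Theory.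
Set Implicit Arguments. Unset Strict Implicit. Unset Printing Implicit Defensive.
Local Open Scope classical_set_scope.
Local Open Scope ring_scope.

Lemma sum_int_nat (R : realType) (n : nat) (F : nat -> R) :
  \sum_(k < (absz n%:Z).+1 | (k%:Z <= n%:Z)%R) F k = \sum_(k < n.+1) F k.
Proof.
by apply: eq_bigl => k /=; rewrite lez_nat -ltnS ltn_ord.
Qed.

Lemma sum_int_nat' (R : realType) (n : nat) (F : 'I_n.+1 -> R) :
  \sum_(k < n.+1 | (k%:Z <= n%:Z)%R) F k = \sum_(k < n.+1) F k.
Proof. by apply: eq_bigl => k /=; rewrite lez_nat -ltnS ltn_ord. Qed.

Lemma sum_int_neg (R : realType) (m : nat) (z : int) (F : 'I_m -> R) :
  z < 0 -> \sum_(k < m | (k%:Z <= z)%R) F k = 0.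
Proof.
move=> hz; apply: big_pred0 => k /=.
by apply/negbTE; rewrite -ltNge (lt_le_trans hz).
Qed.

Lemma conv_vanish (R : realType) (p : int -> int -> R) :
  (forall l, p l 0 = 0) ->
  forall j l z, z < j%:Z -> dconv_pow p j l z = 0.
Proof.
move=> H0; elim=> [|j IH] l z hz /=.
  by rewrite ifF //; apply/negbTE; rewrite lt_eqF.
apply: big1 => k hk.
case: (posnP k) => [k0|kpos].
  by rewrite k0 H0 mul0r.
rewrite IH ?mulr0 //.
have : (1 <= k%:Z) by rewrite lez_nat.
move: hz; rewrite -[j.+1]addn1 PoszD.
lia.
Qed.

Lemma sum_pow_beta (R : realType) (p : int -> int -> R) :
  (forall l, p l 0 = 0) ->
  forall M l w, w < M%:Z -> \sum_(j < M) dconv_pow p j l w = dbeta p l w.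
Proof.
move=> H0 M l [n|n] hw; rewrite /dbeta /=.
  have hn : (n.+1 <= M)%N by rewrite -ltz_nat.
  rewrite [RHS](big_ord_widen M (fun j => dconv_pow p j l n)) //.
  rewrite [RHS]big_mkcond; apply: eq_bigr => i _; case: ifP => // /negbT.
  by rewrite -leqNgt => h; rewrite conv_vanish // ltz_nat.
by apply: big1 => i _; apply: conv_vanish => //; apply: (lt_le_trans (y := 0)).
Qed.

Lemma beta_rec (R : realType) (p : int -> int -> R) :
  (forall l, p l 0 = 0) ->
  forall l (n : nat), dbeta p l n%:Z =
    (n == 0)%:R + \sum_(k < n.+1) p l k%:Z * dbeta p (l - k%:Z) (n%:Z - k%:Z).
Proof.
move=> H0 l n.
rewrite -(@sum_pow_beta _ p H0 n.+2) ?ltz_nat // big_ord_recl /=.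
congr (_ + _); first by case: n.
under eq_bigr => j _ do rewrite sum_int_nat'.
rewrite exchange_big /=; apply: eq_bigr => k _.
rewrite -mulr_sumr; congr (_ * _).
apply: sum_pow_beta => //.
have := ltn_ord k; rewrite -ltz_nat; lia.
Qed.

Lemma beta_recN (R : realType) (p : int -> int -> R) :
  (forall l, p l 0 = 0) ->
  forall l (n N : nat), (n < N)%N -> dbeta p l n%:Z =
    (n == 0)%:R + \sum_(k < N) p l k%:Z * dbeta p (l - k%:Z) (n%:Z - k%:Z).
Proof.
move=> H0 l n N hN; rewrite beta_rec //; congr (_ + _).
rewrite [LHS](big_ord_widen N (fun k : nat => p l k%:Z * dbeta p (l - k%:Z) (n%:Z - k%:Z))) //.
rewrite [LHS]big_mkcond; apply: eq_bigr => i _; case: ifP => // /negbT.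
rewrite -leqNgt => h; rewrite /dbeta ifF ?mulr0 //.
apply/negbTE; rewrite -ltNge; rewrite -ltz_nat in h; lia.
Qed.

Lemma part1_alg (R : realType) (p : int -> int -> R) (q pX : int -> R) :
  (forall l, p l 0 = 0) ->
  (forall n k : nat, (n < k)%N -> p n%:Z k%:Z = 0) ->
  (forall n : nat, pX n%:Z = q n%:Z + \sum_(k < n.+1) p n%:Z k%:Z * pX (n%:Z - k%:Z)) ->
  forall n : nat, pX n%:Z = \sum_(k < n.+1) q (n%:Z - k%:Z) * dbeta p n%:Z k%:Z.
Proof.
move=> H0 Hout Hrec; elim/ltn_ind => n IH.
rewrite (eq_bigr (fun k : 'I_n.+1 => q (n%:Z - k%:Z) * (((nat_of_ord k) == 0%N)%:R +
   \sum_(k1 < n.+1) p n%:Z k1%:Z * dbeta p (n%:Z - k1%:Z) (k%:Z - k1%:Z)))); last first.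
  by move=> k _; rewrite (@beta_recN _ p H0 n%:Z k n.+1).
under eq_bigr do rewrite mulrDr.
rewrite big_split /= big_ord_recl /= subr0 mulr1 big1 ?addr0; last first.
  by move=> i _; rewrite mulr0.
rewrite Hrec; congr (_ + _).
under eq_bigr do rewrite mulr_sumr.
rewrite exchange_big /=; apply: eq_bigr => k1 _.
case: (posnP k1) => [k10|k1pos].
  by rewrite k10 H0 !mul0r big1 // => i _; rewrite mul0r mulr0.
under eq_bigr do rewrite mulrCA.
rewrite -mulr_sumr; congr (_ * _).
have hk1 : (k1 <= n)%N by rewrite -ltnS ltn_ord.
rewrite subzn // IH; last by lia.
rewrite -(big_mkord xpredT (fun k : nat => q (n%:Z - k%:Z) * dbeta p (n - k1)%N%:Z (k%:Z - k1%:Z))).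
rewrite -(big_mkord xpredT (fun k : nat => q ((n - k1)%N%:Z - k%:Z) * dbeta p (n - k1)%N%:Z k%:Z)).
rewrite [RHS](big_cat_nat _ (n := k1)) //=; last by lia.
rewrite [X in _ = X + _]big1_seq ?add0r; last first.
  move=> i; rewrite mem_index_iota => /andP [_ hi].
  rewrite /dbeta ifF ?mulr0 //; apply/negbTE; rewrite -ltNge subr_lt0 ltz_nat //.
rewrite -[X in _ = \sum_(X <= _ < _) _]add0n [RHS]big_addn subSn //.
apply: eq_bigr => i _; congr (q _ * dbeta _ _ _).
  rewrite -subzn // PoszD; lia.
rewrite PoszD; lia.
Qed.

Lemma conv_eq_sconv (R : realType) (p : int -> int -> R) (u : int -> R) :
  (forall l z, z <= l -> p l z = u z) ->
  forall j l z, z <= l -> dconv_pow p j l z = sconv_pow u j z.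
Proof.
move=> Hpu; elim=> [|j IH] l z hz //=.
case: z hz => [n|n] hz; last by rewrite !sum_int_neg.
rewrite /= !sum_int_nat'.
transitivity (\sum_(k < n.+1) u k%:Z * sconv_pow u j (n%:Z - k%:Z)).
  apply: eq_bigr => k _; rewrite Hpu ?IH //.
    by rewrite lerD2r.
  have := ltn_ord k; rewrite -ltz_nat; lia.
rewrite [RHS](reindex_inj rev_ord_inj) /=; apply: eq_bigr => k _.
have hk : (k <= n)%N by rewrite -ltnS ltn_ord.
rewrite subSS (subzn hk); congr (u _ * _).
rewrite -(subzn hk); lia.
Qed.

Lemma beta_eq_gamma (R : realType) (p : int -> int -> R) (u : int -> R) :
  (forall l z, z <= l -> p l z = u z) ->
  forall l z, z <= l -> dbeta p l z = sgamma u z.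
Proof.
move=> Hpu l z hz; rewrite /dbeta /sgamma; case: ifP => // _.
by apply: eq_bigr => j _; apply: conv_eq_sconv.
Qed.

Lemma tri_sum (R : realType) (Q G : nat -> R) (n : nat) :
  \sum_(k < n.+1) (\sum_(i < (n - k).+1) Q i) * G k =
  \sum_(l < n.+1) \sum_(k < l.+1) Q (l - k)%N * G k.
Proof.
elim: n => [|n IH]; first by rewrite !big_ord1 /=.
rewrite big_ord_recr /= subnn big_ord1.
rewrite [RHS]big_ord_recr /= -IH [X in _ = _ + X]big_ord_recr /= subnn.
rewrite addrA; congr (_ + _).
rewrite -big_split /=; apply: eq_bigr => k _.
rewrite subSn; last by rewrite -ltnS ltn_ord.
by rewrite big_ord_recr /= mulrDl.
Qed.

Lemma floorBn (R : realType) (y : R) (k : nat) :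
  Num.floor (y - k%:R) = Num.floor y - k%:Z.
Proof.
have -> : (k%:R : R) = (k%:Z)%:~R by rewrite pmulrn.
rewrite -mulrNz floorDrz ?intrKfloor //.
Qed.

Lemma theta_alg (R : realType) (q g : int -> R) (y : R) (n : nat) :
  Num.floor y = n%:Z ->
  Theta_conv q g y =
  \sum_(l < n.+1) \sum_(k < l.+1) q (l%:Z - k%:Z) * g k%:Z.
Proof.
move=> hy; rewrite /Theta_conv hy /= sum_int_nat'.
transitivity (\sum_(k < n.+1) (\sum_(i < (n - k).+1) q i%:Z) * g k%:Z).
  apply: eq_bigr => k _; congr (_ * _).
  have hk : (k <= n)%N by rewrite -ltnS ltn_ord.
  by rewrite /Theta floorBn hy (subzn hk) /= sum_int_nat'.
rewrite (tri_sum (fun i => q i%:Z) (fun k => g k%:Z)).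
apply: eq_bigr => l _; apply: eq_bigr => k _.
have hk : (k <= l)%N by rewrite -ltnS ltn_ord.
by rewrite (subzn hk).
Qed.

Lemma theta_neg (R : realType) (q g : int -> R) (y : R) :
  Num.floor y < 0 -> Theta_conv q g y = 0.
Proof. by move=> hy; rewrite /Theta_conv sum_int_neg. Qed.
Lemma meas_sandwich (d : measure_display) (T : measurableType d) (R : realType)
  (P : probability T R) (A B N : set T) :
  measurable A -> measurable B -> measurable N -> B `<=` A -> A `<=` B `|` N ->
  P N = 0%E -> P A = P B.
Proof.
move=> mA mB mN BA ABN PN; apply/eqP; rewrite eq_le; apply/andP; split.
  apply: (le_trans (le_measure P _ _ ABN)); rewrite ?inE //; first exact: measurableU.
  apply: (le_trans (measureU2 P mB mN)).
  first [ by rewrite [P N]PN adde0 | by move: PN => /= ->; rewrite adde0 | by apply: eq_le; rewrite -[RHS]adde0; congr (_ + _)%E ].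
by apply: le_measure; rewrite ?inE.
Qed.

Lemma fin_union_prob (d : measure_display) (T : measurableType d) (R : realType)
  (P : probability T R) (A N : set T) (G : nat -> set T) (n : nat) :
  measurable A -> measurable N -> (forall i, measurable (G i)) -> P N = 0%E ->
  (forall i j t, G i t -> G j t -> i = j) ->
  (forall i, (i < n)%N -> G i `<=` A) ->
  (forall t, A t -> N t \/ exists2 i, (i < n)%N & G i t) ->
  fine (P A) = \sum_(i < n) fine (P (G i)).
Proof.
move=> mA mN mG PN Ginj GA AGN.
have mB : measurable (\big[setU/set0]_(i < n) G i).
  by apply: bigsetU_measurable => i _.
rewrite (@meas_sandwich _ _ _ P A (\big[setU/set0]_(i < n) G i) N) //; first last.
- move=> t At; case: (AGN t At) => [Nt|[i ilt Gt]]; first by right.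
  by left; rewrite -bigcup_mkord; exists i.
- by rewrite -bigcup_mkord => t [i ilt Gt]; exact: (GA i ilt).
rewrite (@measure_bigsetU_ord _ _ _ P n xpredT (fun i => G i)) //.
  by rewrite -sum_fine // => i _; exact: fin_num_measure.
by move=> i j _ _ [t [h1 h2]]; apply: val_inj; exact: (Ginj _ _ t).
Qed.

Lemma xi_mono (R : realType) (xi : nat -> R) :
  (forall l, xi l < xi l.+1) -> forall i j, (xi i <= xi j) = (i <= j)%N.
Proof.
move=> hxi.
have hlt : forall i j, (i < j)%N -> xi i < xi j.
  by move=> i j; apply: (homo_ltn (r := fun a b => a < b)) => // ? ? ?; apply: lt_trans.
move=> i j; case: (leqP i j) => h.
  by apply/idP; move: h; rewrite leq_eqVlt => /orP [/eqP ->|/hlt /ltW].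
by apply/negbTE; rewrite -ltNge; exact: hlt.
Qed.

Lemma range_meas (R : realType) (xi : nat -> R) : measurable (range xi).
Proof.
have -> : range xi = \bigcup_m [set xi m].
  by apply/seteqP; split => [y [m _ <-]|y [m _ ->]]; exists m.
by apply: bigcupT_measurable => m; exact: measurable_set1.
Qed.

Lemma distr_sum (d : measure_display) (T : measurableType d) (R : realType)
  (P : probability T R) (X : {RV P >-> R}) (xi : nat -> R) (x : R) (N : nat) :
  (forall l, xi l < xi l.+1) -> P (X @^-1` range xi) = 1%E ->
  (forall m, (xi m <= x) = (m < N)%N) ->
  distr_fn P X x = \sum_(m < N) atom_mass P X (xi m).
Proof.
move=> hxi hr hx; rewrite /distr_fn /atom_mass.
have mr : measurable (X @^-1` range xi) by apply: measurable_funPTI; exact: range_meas.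
apply: (@fin_union_prob _ _ _ P _ (~` (X @^-1` range xi)) (fun i => X @^-1` [set xi i])).
- by apply: measurable_funPTI; exact: measurable_itv.
- exact: measurableC.
- by move=> i; apply: measurable_funPTI; exact: measurable_set1.
- by rewrite probability_setC // hr subee.
- move=> i j t /= Ei Ej; have E : xi i = xi j by rewrite -Ei -Ej.
  by apply/eqP; rewrite eqn_leq -!(xi_mono hxi) E le_refl.
- move=> i hi t /= Et; rewrite in_itv /= Et hx //.
- move=> t /=; rewrite in_itv /= => hXt.
  case: (pselect (range xi (X t))) => [[m _ Em]|nr]; last by left.
  by right; exists m => //; rewrite -hx Em.
Qed.

Lemma null_union (d : measure_display) (T : measurableType d) (R : realType)
  (P : probability T R) (A B : set T) :
  measurable A -> measurable B -> P A = 0%E -> P B = 0%E -> P (A `|` B) = 0%E.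
Proof.
move=> mA mB PA PB; apply/eqP; rewrite eq_le measure_ge0 andbT.
have hA : (P A <= 0)%E by rewrite PA.
have hB : (P B <= 0)%E by rewrite PB.
apply: (le_trans (measureU2 P mA mB)); rewrite -(adde0 0%E); exact: leeD hA hB.
Qed.

Lemma atomY_sum (d : measure_display) (T : measurableType d) (R : realType)
  (P : probability T R) (X eps : {RV P >-> R}) (xi : nat -> R) (z0 : R) (l : nat) :
  indep_RV P X eps -> (forall l, xi l < xi l.+1) -> P (X @^-1` range xi) = 1%E ->
  cdf_left P eps z0 = 0 ->
  atom_mass P (fun t => X t + eps t) (z0 + xi l) =
  \sum_(m < l.+1) atom_mass P X (xi m) * atom_mass P eps (z0 + xi l - xi m).
Proof.
move=> hind hxi hr hcdf; rewrite /atom_mass.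
set c := z0 + xi l.
have mr : measurable (X @^-1` range xi) by apply: measurable_funPTI; exact: range_meas.
have me : measurable (eps @^-1` `]-oo, z0[) by apply: measurable_funPTI; exact: measurable_itv.
have Pe : P (eps @^-1` `]-oo, z0[) = 0%E.
  by rewrite -[LHS]fineK ?fin_num_measure // -/(cdf_left P eps z0) hcdf.
have mY : measurable ((fun t => X t + eps t) @^-1` [set c]).
  have := @measurable_realfun.measurable_funD _ _ _ setT X eps (measurable_funP X) (measurable_funP eps).
  by move=> /(_ measurableT [set c] (measurable_set1 c)); rewrite setTI.
rewrite (@fin_union_prob _ _ _ P _ (~` (X @^-1` range xi) `|` eps @^-1` `]-oo, z0[)
   (fun m => X @^-1` [set xi m] `&` eps @^-1` [set c - xi m]) l.+1) //.
- apply: eq_bigr => m _; rewrite hind ?fineM ?fin_num_measure //;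
    try exact: measurable_set1; apply: measurable_funPTI; exact: measurable_set1.
- by apply: measurableU => //; exact: measurableC.
- move=> m; apply: measurableI; apply: measurable_funPTI; exact: measurable_set1.
- by apply: null_union => //; [exact: measurableC | rewrite probability_setC // hr subee].
- move=> i j t /= [Ei _] [Ej _]; have E : xi i = xi j by rewrite -Ei -Ej.
  by apply/eqP; rewrite eqn_leq -!(xi_mono hxi) E le_refl.
- by move=> i _ t /= [-> ->]; rewrite addrC subrK.
- move=> t /= hc.
  case: (pselect (range xi (X t))) => [[m _ Em]|nr]; last by left; left.
  case: (ltP (eps t) z0) => he; first by left; right; rewrite /= in_itv /=.
  right; exists m; last by split => //; rewrite -hc Em; lra.
  rewrite ltnS -(xi_mono hxi).
  have : eps t = c - xi m by rewrite -hc Em; lra.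
  move: he; rewrite /c => he E; rewrite E in he; lra.
Qed.

Unset Implicit Arguments.

Theorem corollary2 (d : measure_display) (T : measurableType d) (R : realType)
  (P : probability T R) (X eps : {RV P >-> R}) (xi : nat -> R) (z0 : R) :
  indep_RV P X eps ->
  (forall l, xi l < xi l.+1) ->
  P (X @^-1` range xi) = 1%E ->
  0 < atom_mass P X (xi 0%N) ->
  purely_discrete P eps ->
  0 < atom_mass P eps z0 ->
  cdf_left P eps z0 = 0 ->
  let Y := fun t => X t + eps t in
  (forall l : int,
     p_X P X xi l =
     \sum_(k < (absz l).+1 | (k%:Z <= l)%R)
        pdd_Y P Y eps xi z0 (l - k%:Z) * dbeta (pdd_eps P eps xi z0) l k%:Z)
  /\
  (forall s : R, 0 < s -> (forall l : nat, xi l = xi 0%N + s * l%:R) ->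
     forall x : R,
       distr_fn P X x =
       Theta_conv (pdd_Y P Y eps xi z0)
                  (sgamma (fun z => pdd_eps P eps xi z0 z z)) ((x - xi 0%N) / s)).
Proof.
move=> hind hxi hr _ _ hF0 hcdf Y.
set p := pdd_eps P eps xi z0.
set q := pdd_Y P Y eps xi z0.
have F0n : atom_mass P eps z0 != 0 by rewrite gt_eqF.
have H0 : forall l, p l 0 = 0.
  move=> l; rewrite /p /pdd_eps; case: ifP => // hl.
  by rewrite eqxx lexx hl /= subr0 addrK divff // subrr.
have Hout : forall n k : nat, (n < k)%N -> p n%:Z k%:Z = 0.
  move=> n k hnk; rewrite /p /pdd_eps /= ifF; last by apply/negbTE; lia.
  by rewrite ifF ?subrr //; apply/negbTE; rewrite lez_nat -ltnNge.
have Hrec : forall n : nat, p_X P X xi n%:Z =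
    q n%:Z + \sum_(k < n.+1) p n%:Z k%:Z * p_X P X xi (n%:Z - k%:Z).
  move=> n.
  have -> : q n%:Z = \sum_(k < n.+1) p_X P X xi (n%:Z - k%:Z) * (((nat_of_ord k) == 0%N)%:R - p n%:Z k%:Z).
    rewrite /q /pdd_Y /= (atomY_sum n hind hxi hr hcdf) mulr_suml.
    rewrite (reindex_inj rev_ord_inj) /=; apply: eq_bigr => k _.
    have hk : (k <= n)%N by rewrite -ltnS ltn_ord.
    rewrite subSS (subzn hk) /p_X /p /pdd_eps /= -mulrA; congr (_ * _).
    rewrite lez_nat hk (subzn hk) /= eqz_nat.
    by case: (_ == 0%N) => /=; ring.
  under [in RHS]eq_bigr do rewrite mulrBr.
  rewrite big_split /= sumrN big_ord_recl /= subr0 mulr1 big1 ?addr0; last first.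
    by move=> i _; rewrite mulr0.
  rewrite (eq_bigr (fun k : 'I_n.+1 => p n%:Z k%:Z * p_X P X xi (n%:Z - k%:Z))) ?addrNK //.
  by move=> k _; exact: mulrC.
have part1 : forall l : int, p_X P X xi l =
     \sum_(k < (absz l).+1 | (k%:Z <= l)%R) q (l - k%:Z) * dbeta p l k%:Z.
  case=> [n|n].
    by rewrite /= sum_int_nat'; exact: part1_alg.
  by rewrite sum_int_neg // /p_X.
split => // s hs hxs x.
set u := fun z => p z z.
have Hpu : forall l z, z <= l -> p l z = u z.
  move=> l [b|b] hzl; rewrite /u /p /pdd_eps; last first.
    by rewrite /=; case: ifP => //= _; rewrite subrr.
  case: l hzl => [a|a] hzl; last by move: hzl; rewrite /=; lia.
  have hba : (b <= a)%N by rewrite -lez_nat.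
  rewrite /= !lez_nat hba leqnn (subzn hba) subrr /=; congr (_ - _ / _).
  rewrite (hxs a) (hxs (a - b)%N) (hxs b) natrB //. congr (atom_mass _ _ _); ring.
have beq : forall (l k : nat), (k <= l)%N -> dbeta p l k = sgamma u k.
  by move=> l k h; apply: beta_eq_gamma => //; rewrite lez_nat.
set y := (x - xi 0%N) / s.
case: (ltP (Num.floor y) 0) => hN.
  rewrite theta_neg // (@distr_sum _ _ _ P X xi x 0 hxi hr) ?big_ord0 //.
  have hx0 : x < xi 0%N.
    by move: hN; rewrite floor_lt_int /y ltr_pdivrMr // mul0r subr_lt0.
  move=> m; apply/negbTE; rewrite -ltNge; apply: (lt_le_trans hx0).
  by rewrite (xi_mono hxi).
have [n hn] : exists n : nat, Num.floor y = n%:Z.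
  by case: (Num.floor y) hN => [n|n] //; exists n.
rewrite (theta_alg _ _ hn) (@distr_sum _ _ _ P X xi x n.+1 hxi hr); last first.
  move=> m; rewrite ltnS -(lez_nat m n) -hn floor_ge_int /y ler_pdivlMr //.
  rewrite (hxs m) pmulrn; apply/idP/idP => h; lra.
apply: eq_bigr => l _.
have := part1 l; rewrite /p_X /= sum_int_nat' => ->.
apply: eq_bigr => k _; rewrite beq //.
by rewrite -ltnS ltn_ord.
Qed.
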